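(* The homomorphism $P\Gamma_L\to{\rm PGL}_2(7)$ is surjective.
   Context: Let $\mathcal{O}$ be the ring of integers of $\mathbb{Q}(\sqrt{-7})$, $\Gamma_L$ the unitary group of the standard Hermitian lattice $\mathcal{O}[\tfrac12]^3$, and $P\Gamma_L$ its quotient by scalars; a fixed embedding $\mathcal{O}\to\mathbb{Z}_2$ identifies $P\Gamma_L$ with a lattice in ${\rm PGL}_3(\mathbb{Q}_2)$. With $\theta=\sqrt{-7}$, the Hermitian form induces a nondegenerate symmetric bilinear form on $\mathcal{O}[\tfrac12]^3/\theta\mathcal{O}[\tfrac12]^3\cong\mathbb{F}_7^3$, yielding the homomorphism $P\Gamma_L\to{\rm PO}_3(7)\cong{\rm PGL}_2(7)$ in question. *)

(* Defs.v *)
From mathcomp Require Import all_boot all_order all_algebra all_field.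
Set Implicit Arguments. Unset Strict Implicit. Unset Printing Implicit Defensive.
Import Order.TTheory GRing.Theory Num.Theory.
Local Open Scope ring_scope.

(* alpha = (1 + sqrt(-7))/2, so O = Z[alpha] is the ring of integers of Q(sqrt -7)
   and theta = sqrt(-7) = 2 alpha - 1. *)
Definition alpha : algC := (1 + sqrtC (-7)) / 2.

Definition dyadic (q : rat) : Prop := exists k : nat, denq q = (2 ^ k)%:Z.

(* the reduction Z_(7) -> F_7 (used only on dyadic rationals) *)
Definition redQ7 (q : rat) : 'F_7 := (numq q)%:~R / (denq q)%:~R.

Definition in_Oh (x : algC) : Prop :=
  exists a b : rat, [/\ dyadic a, dyadic b & x = ratr a + ratr b * alpha].

(* reduction modulo theta = sqrt(-7): O[1/2]/theta O[1/2] = F_7, with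
   alpha |-> 1/2 = 4 (since 2 alpha = 1 + theta).  [reduces_to x y] says
   x is in O[1/2] and its reduction mod theta is y. *)
Definition reduces_to (x : algC) (y : 'F_7) : Prop :=
  exists a b : rat, [/\ dyadic a, dyadic b, x = ratr a + ratr b * alpha
                     & y = redQ7 a + 4 * redQ7 b].

(* Gamma_L: unitary group of the standard Hermitian lattice O[1/2]^3,
   h(x,y) = sum_i x_i conj(y_i): g has entries in O[1/2] and g^* g = 1
   (then g^{-1} = g^* also has entries in O[1/2]). *)
Definition Gamma_L (g : 'M[algC]_3) : Prop :=
  (forall i j, in_Oh (g i j)) /\ (map_mx (fun x => x^*) g)^T *m g = 1.

Definition O3_7 (g : 'M['F_7]_3) : Prop := g^T *m g = 1.

(* Main.v *)
Require Import Defs.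
From mathcomp Require Import all_boot all_order all_algebra all_field.
From mathcomp Require Import ring.
Import GRing.Theory Num.Theory.
Local Open Scope ring_scope.

Lemma two_neq0F : (2 : 'F_7) != 0. Proof. by []. Qed.

Lemma dy_rep (n : int) k : dyadic (n%:~R / 2 ^+ k) /\ redQ7 (n%:~R / 2 ^+ k) = n%:~R / 2 ^+ k.
Proof.
set q := (n%:~R / 2 ^+ k : rat).
have E : numq q * 2 ^+ k = n * denq q.
  apply: (@intr_inj rat); rewrite !rmorphM /= rmorphXn /= numqE /q.
  by field; rewrite expf_neq0.
have Hd : exists m : nat, denq q = (2 ^ m)%:Z.
  have E' := congr1 absz E; rewrite !abszM abszX /= in E'.
  have : (`|denq q| %| `|numq q| * 2 ^ k)%N by rewrite E' dvdn_mull.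
  rewrite Gauss_dvdr; last by rewrite coprime_sym coprime_num_den.
  case/(dvdn_pfactor _ _ (isT : prime 2)) => m _ hm.
  by exists m; rewrite -absz_denq hm.
have [m hm] := Hd.
split; first by exists m.
have nz : ((denq q)%:~R : 'F_7) != 0 by rewrite hm -[((2^m)%:Z)%:~R]/((2^m)%:R) natrX expf_neq0.
rewrite /redQ7; apply/eqP; rewrite eqr_div // ?expf_neq0 //.
apply/eqP; have := congr1 (fun z : int => (z%:~R : 'F_7)) E.
by rewrite /= !rmorphM /= rmorphXn.
Qed.
Lemma s2 : sqrtC (-7 : algC) ^+ 2 = -7.
Proof. exact: sqrtCK. Qed.

Lemma s_neq0 : sqrtC (-7 : algC) != 0.
Proof. by rewrite sqrtC_eq0 oppr_eq0 pnatr_eq0. Qed.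

Lemma conj_s : (sqrtC (-7 : algC))^* = - sqrtC (-7).
Proof.
set s := sqrtC _.
have h : s * s^* = 7.
  by rewrite -normCK -normrX s2 normrN normr_nat.
apply: (mulfI s_neq0); rewrite h mulrN -expr2 s2 opprK //.
Qed.

Lemma conj_alpha : alpha^* = 1 - alpha.
Proof.
rewrite /alpha fmorph_div rmorphD rmorph1 (rmorph_nat _ 2).
have -> : Num.Num_conj__canonical__GRing_RMorphism _ (sqrtC (-7)) = - sqrtC (-7) :> algC by exact: conj_s.
by field.
Qed.

Lemma alpha_rel : alpha ^+ 2 - alpha + 2 = 0.
Proof.
rewrite /alpha; set s := sqrtC _.
have -> : ((1 + s) / 2) ^+ 2 - (1 + s) / 2 + 2 = (s ^+ 2 + 7) / 4 by field.
by rewrite s2 addNr mul0r.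
Qed.

Lemma two_neq0C : (2 : algC) != 0. Proof. by rewrite pnatr_eq0. Qed.
Lemma fourteen0 : (14 : 'F_7) = 0. Proof. by apply/eqP. Qed.

Lemma intr2 (R : pzRingType) : (2 : int)%:~R = 2 :> R.
Proof. by rewrite -[2 in LHS]/(2%:Z) -natz. Qed.

Definition Ac (n m : int) (k : nat) : algC := (n%:~R + m%:~R * alpha) / 2 ^+ k.
Definition Rf (n m : int) (k : nat) : 'F_7 := (n%:~R + 4 * m%:~R) / 2 ^+ k.

Lemma ratr_rep (n : int) k : ratr (n%:~R / 2 ^+ k : rat) = (n%:~R / 2 ^+ k : algC).
Proof. by rewrite fmorph_div rmorph_int rmorphXn rmorph_nat. Qed.

Lemma rt_intro n m k : reduces_to (Ac n m k) (Rf n m k).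
Proof.
have [d1 r1] := dy_rep n k; have [d2 r2] := dy_rep m k.
exists (n%:~R / 2 ^+ k), (m%:~R / 2 ^+ k); split => //.
  rewrite /Ac !ratr_rep; field; exact: expf_neq0 two_neq0C.
rewrite /Rf r1 r2; field; exact: expf_neq0 two_neq0F.
Qed.

Lemma rt_elim x y : reduces_to x y -> exists n m k, x = Ac n m k /\ y = Rf n m k.
Proof.
case=> a [b [[k1 ha] [k2 hb] -> ->]].
have ea : a = (numq a)%:~R / 2 ^+ k1.
  by rewrite -[LHS]divq_num_den ha -[((2^k1)%:Z)%:~R]/((2^k1)%:R) natrX.
have eb : b = (numq b)%:~R / 2 ^+ k2.
  by rewrite -[LHS]divq_num_den hb -[((2^k2)%:Z)%:~R]/((2^k2)%:R) natrX.
exists (numq a * 2 ^+ k2), (numq b * 2 ^+ k1), (k1 + k2)%N; split.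
  rewrite [in ratr a]ea [in ratr b]eb !ratr_rep /Ac ?intr2 !rmorphM /= !rmorphXn /= exprD.
  field; rewrite !expf_neq0 //; exact: two_neq0C.
rewrite /redQ7 ha hb /Rf !rmorphM /= !rmorphXn /= exprD ?intr2.
rewrite -[((2^k1)%:Z)%:~R]/((2^k1)%:R) -[((2^k2)%:Z)%:~R]/((2^k2)%:R) !natrX.
field; rewrite !expf_neq0 //; exact: two_neq0F.
Qed.

Lemma rt_add x y x' y' : reduces_to x y -> reduces_to x' y' -> reduces_to (x + x') (y + y').
Proof.
move=> /rt_elim [n [m [k [-> ->]]]] /rt_elim [n' [m' [k' [-> ->]]]].
have := rt_intro (n * 2 ^+ k' + n' * 2 ^+ k) (m * 2 ^+ k' + m' * 2 ^+ k) (k + k').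
congr reduces_to.
  rewrite /Ac !rmorphD !rmorphM /= !rmorphXn /= exprD.
  field; rewrite !expf_neq0 //; exact: two_neq0C.
rewrite /Rf !rmorphD !rmorphM /= !rmorphXn /= exprD.
field; rewrite !expf_neq0 //; exact: two_neq0F.
Qed.

Lemma rt_mul x y x' y' : reduces_to x y -> reduces_to x' y' -> reduces_to (x * x') (y * y').
Proof.
move=> /rt_elim [n [m [k [-> ->]]]] /rt_elim [n' [m' [k' [-> ->]]]].
have := rt_intro (n * n' - 2 * m * m') (n * m' + m * n' + m * m') (k + k').
congr reduces_to.
  rewrite /Ac !rmorphD !rmorphN !rmorphM /= exprD ?intr2.
  apply: subr0_eq.
  rewrite -(mulr0 (- (m%:~R * m'%:~R) / (2 ^+ k * 2 ^+ k'))) -alpha_rel.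
  field; rewrite !expf_neq0 //; exact: two_neq0C.
rewrite /Rf !rmorphD !rmorphN !rmorphM /= exprD ?intr2.
apply: subr0_eq.
rewrite -(mulr0 (- (m%:~R * m'%:~R) / (2 ^+ k * 2 ^+ k'))) -fourteen0.
field; rewrite !expf_neq0 //; exact: two_neq0F.
Qed.

Lemma rt0 : reduces_to 0 0.
Proof. by have := rt_intro 0 0 0; congr reduces_to; rewrite /Ac /Rf !rmorph0 ?mul0r ?mulr0 !addr0 mul0r. Qed.
Lemma rt1 : reduces_to 1 1.
Proof. by have := rt_intro 1 0 0; congr reduces_to; rewrite /Ac /Rf rmorph1 rmorph0 ?mul0r ?mulr0 !addr0 expr0 divr1. Qed.

Definition lift (g : 'M['F_7]_3) := exists gam : 'M[algC]_3,
  (map_mx (fun x => x^*) gam)^T *m gam = 1 /\ forall i j, reduces_to (gam i j) (g i j).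

Lemma lift_mul A B : lift A -> lift B -> lift (A *m B).
Proof.
move=> [G1 [u1 r1]] [G2 [u2 r2]]; exists (G1 *m G2); split.
  by rewrite map_mxM trmx_mul -mulmxA (mulmxA _ G1) u1 mul1mx u2.
move=> i j; rewrite !mxE; apply: (big_ind2 reduces_to).
- exact: rt0.
- by move=> ? ? ? ?; apply: rt_add.
- by move=> k _; apply: rt_mul.
Qed.

Lemma lift1 : lift 1.
Proof.
exists 1; split; first by rewrite map_mx1 trmx1 mulmx1.
by move=> i j; rewrite !mxE; case: (i == j); [exact: rt1 | exact: rt0].
Qed.

Definition gamNM (N M : seq int) : 'M[algC]_3 :=
  \matrix_(i, j) (((nth 0 N (3 * i + j))%:~R + (nth 0 M (3 * i + j))%:~R * alpha) / 2).

Lemma conj_term (n m n' m' : int) :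
  ((n%:~R + m%:~R * alpha) / 2)^* * ((n'%:~R + m'%:~R * alpha) / 2) =
  ((n * n' + m * n' + 2 * m * m')%:~R + (n * m' - m * n')%:~R * alpha) / 4.
Proof.
rewrite fmorph_div rmorphD rmorphM !rmorph_int rmorph_nat.
have -> : Num.Num_conj__canonical__GRing_RMorphism _ alpha = 1 - alpha :> algC by exact: conj_alpha.
rewrite ?intr2.
apply: subr0_eq.
rewrite -(mulr0 (- (m%:~R * m'%:~R) / 4)) -alpha_rel.
by field.
Qed.

Lemma sum3 (p1 q1 p2 q2 p3 q3 : int) (r : nat) :
  p1 + p2 + p3 = 4 * r%:Z -> q1 + q2 + q3 = 0 ->
  0 + (p1%:~R + q1%:~R * alpha) / 4 + (p2%:~R + q2%:~R * alpha) / 4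
    + (p3%:~R + q3%:~R * alpha) / 4 = r%:R :> algC.
Proof.
move=> hp hq.
have -> : 0 + (p1%:~R + q1%:~R * alpha) / 4 + (p2%:~R + q2%:~R * alpha) / 4
    + (p3%:~R + q3%:~R * alpha) / 4 = ((p1 + p2 + p3)%:~R + (q1 + q2 + q3)%:~R * alpha) / 4 :> algC.
  by rewrite !rmorphD; field.
rewrite hp hq rmorph0 mul0r addr0 rmorphM /=.
by rewrite -[r%:Z%:~R]/(r%:R); field.
Qed.

Definition pe (N M : seq int) (a b : nat) : int :=
  nth 0 N a * nth 0 N b + nth 0 M a * nth 0 N b + 2 * nth 0 M a * nth 0 M b.
Definition qe (N M : seq int) (a b : nat) : int :=
  nth 0 N a * nth 0 M b - nth 0 M a * nth 0 N b.

Lemma gam_unitary N M :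
  (forall i j : 'I_3,
     pe N M (3 * 0 + i) (3 * 0 + j) + pe N M (3 * 1 + i) (3 * 1 + j) + pe N M (3 * 2 + i) (3 * 2 + j) = 4 * (i == j)%:Z
  /\ qe N M (3 * 0 + i) (3 * 0 + j) + qe N M (3 * 1 + i) (3 * 1 + j) + qe N M (3 * 2 + i) (3 * 2 + j) = 0) ->
  (map_mx (fun x => x^*) (gamNM N M))^T *m gamNM N M = 1.
Proof.
move=> H; apply/matrixP => i j; rewrite !mxE !big_ord_recr big_ord0 /= !mxE.
rewrite !conj_term.
have [h1 h2] := H i j.
exact: (sum3 _ _ _ _ _ _ _ h1 h2).
Qed.

Definition mxN (s : seq nat) : 'M['F_7]_3 := \matrix_(i, j) (nth 0 s (3 * i + j))%:R.

Lemma lift_gam N M (g : seq nat) :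
  (forall i j : 'I_3,
     pe N M (3 * 0 + i) (3 * 0 + j) + pe N M (3 * 1 + i) (3 * 1 + j) + pe N M (3 * 2 + i) (3 * 2 + j) = 4 * (i == j)%:Z
  /\ qe N M (3 * 0 + i) (3 * 0 + j) + qe N M (3 * 1 + i) (3 * 1 + j) + qe N M (3 * 2 + i) (3 * 2 + j) = 0) ->
  (forall i j : 'I_3, Rf (nth 0 N (3 * i + j)) (nth 0 M (3 * i + j)) 1 = (nth 0 g (3 * i + j))%:R) ->
  lift (mxN g).
Proof.
move=> hu hr; exists (gamNM N M); split; first exact: gam_unitary.
move=> i j; rewrite !mxE -hr.
by have := rt_intro (nth 0 N (3 * i + j)) (nth 0 M (3 * i + j)) 1; congr reduces_to; rewrite /Ac expr1.
Qed.

Definition gT12 : seq nat := [:: 0;1;0; 1;0;0; 0;0;1].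
Definition gT23 : seq nat := [:: 1;0;0; 0;0;1; 0;1;0].
Definition gD : seq nat := [:: 6;0;0; 0;1;0; 0;0;1].
Definition gR : seq nat := [:: 2;2;0; 5;2;0; 0;0;1].

Ltac gen_tac := apply: lift_gam;
  move=> [[|[|[|i]]] Hi] [[|[|[|j]]] Hj] //; first [split; reflexivity | apply/eqP; vm_compute; reflexivity].

Lemma lift_T12 : lift (mxN gT12).
Proof. apply: (@lift_gam [:: 0;2;0; 2;0;0; 0;0;2] [:: 0;0;0;0;0;0;0;0;0]);
  move=> [[|[|[|i]]] Hi] [[|[|[|j]]] Hj] //; first [split; reflexivity | apply/eqP; vm_compute; reflexivity]. Qed.
Lemma lift_T23 : lift (mxN gT23).
Proof. apply: (@lift_gam [:: 2;0;0; 0;0;2; 0;2;0] [:: 0;0;0;0;0;0;0;0;0]);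
  move=> [[|[|[|i]]] Hi] [[|[|[|j]]] Hj] //; first [split; reflexivity | apply/eqP; vm_compute; reflexivity]. Qed.
Lemma lift_D : lift (mxN gD).
Proof. apply: (@lift_gam [:: -2;0;0; 0;2;0; 0;0;2] [:: 0;0;0;0;0;0;0;0;0]);
  move=> [[|[|[|i]]] Hi] [[|[|[|j]]] Hj] //; first [split; reflexivity | apply/eqP; vm_compute; reflexivity]. Qed.
Lemma lift_R : lift (mxN gR).
Proof. apply: (@lift_gam [:: 0;1;0; 0;1;0; 0;0;2] [:: 1;-1;0; -1;-1;0; 0;0;0]);
  move=> [[|[|[|i]]] Hi] [[|[|[|j]]] Hj] //; first [split; reflexivity | apply/eqP; vm_compute; reflexivity]. Qed.

Definition F7 : seq nat := iota 0 7.
Definition nth0 (s : seq nat) n := nth 0%N s n.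
Definition mulN (s t : seq nat) : seq nat :=
  mkseq (fun n => let i := (n %/ 3)%N in let j := (n %% 3)%N in
     ((nth0 s (3*i) * nth0 t j + nth0 s (3*i+1) * nth0 t (3+j) + nth0 s (3*i+2) * nth0 t (6+j)) %% 7)%N) 9.
Definition gens : seq (seq nat) := [:: gT12; gT23; gD; gR].
Definition id9 : seq nat := [:: 1;0;0; 0;1;0; 0;0;1]%N.
Fixpoint clos (n : nat) (S : seq (seq nat)) :=
  if n is n'.+1 then
    let N := undup [seq x <- [seq mulN s g | s <- S, g <- gens] | x \notin S] in
    if N is [::] then S else clos n' (N ++ S)
  else S.

Lemma mxN_mul s t : mxN (mulN s t) = mxN s *m mxN t.
Proof.
apply/matrixP => i j; rewrite !mxE !big_ord_recr big_ord0 /= !mxE.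
case: i => [[|[|[|i]]] Hi] //; case: j => [[|[|[|j]]] Hj] //;
  by rewrite /mulN nth_mkseq //; cbv beta zeta; rewrite Fp_nat_mod // !natrD !natrM add0r.
Qed.

Lemma clos_sound (P : seq nat -> Prop) n S : (forall s, s \in S -> P s) ->
  (forall s g, P s -> g \in gens -> P (mulN s g)) -> forall s, s \in clos n S -> P s.
Proof.
move=> hS hm; elim: n S hS => [|n IH] S hS //=.
case E: (undup _) => [|x N]; first exact hS.
apply: IH => s; rewrite mem_cat => /orP [|]; last exact: hS.
rewrite -E mem_undup mem_filter => /andP [_ /flatten_mapP [s0 hs0]].
by rewrite !inE => /or4P [] /eqP ->; apply: hm; rewrite ?inE ?eqxx ?orbT //; apply: hS.
Qed.

Definition chk (S : seq (seq nat)) := (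
  all (fun a => all (fun b => all (fun c => if (a*a+b*b+c*c) %% 7 == 1 then
   all (fun d => all (fun e => all (fun f => if ((d*d+e*e+f*f) %% 7 == 1) && ((a*d+b*e+c*f) %% 7 == 0) then
     all (fun gg => all (fun h => all (fun k => if ((gg*gg+h*h+k*k) %% 7 ==1) && ((a*gg+b*h+c*k) %% 7==0) && ((d*gg+e*h+f*k) %% 7==0) then [:: a;d;gg;b;e;h;c;f;k] \in S else true) F7) F7) F7
   else true) F7) F7) F7 else true) F7) F7) F7)%N.

Lemma chk_ok : chk (clos 30 [:: id9]).
Proof. by vm_compute. Qed.

Lemma mxN_id9 : mxN id9 = 1.
Proof.
apply/matrixP => i j; rewrite !mxE.
by case: i => [[|[|[|i]]] Hi] //; case: j => [[|[|[|j]]] Hj].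
Qed.

Lemma lift_gens x g : lift (mxN x) -> g \in gens -> lift (mxN (mulN x g)).
Proof.
move=> hx; rewrite mxN_mul !inE => /or4P [] /eqP ->; apply: lift_mul hx _.
- exact: lift_T12.
- exact: lift_T23.
- exact: lift_D.
- exact: lift_R.
Qed.

Lemma lift_all s : s \in clos 30 [:: id9] -> lift (mxN s).
Proof.
move=> hs; refine (@clos_sound (fun s => lift (mxN s)) 30 [:: id9] _ lift_gens s hs).
by move=> x; rewrite inE => /eqP ->; rewrite mxN_id9; exact: lift1.
Qed.

Lemma sum_I3 (R : nmodType) (F : 'I_3 -> R) : \sum_(k < 3) F k = F 0 + F 1 + F 2.
Proof.
rewrite !big_ord_recl big_ord0 addr0 addrA.
by congr (F _ + F _ + F _); apply/val_inj.
Qed.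

Lemma valF (n : nat) : nat_of_ord (n%:R : 'F_7) = (n %% 7)%N.
Proof. by rewrite Zp_nat. Qed.

Lemma dotv (u v w x y z : 'F_7) (r : nat) : u * x + v * y + w * z = r%:R ->
  ((nat_of_ord u * nat_of_ord x + nat_of_ord v * nat_of_ord y + nat_of_ord w * nat_of_ord z) %% 7 == r %% 7)%N.
Proof.
move=> H.
rewrite -[u]natr_Zp -[v]natr_Zp -[w]natr_Zp -[x]natr_Zp -[y]natr_Zp -[z]natr_Zp in H.
by move: H; rewrite -!natrM -!natrD => /(congr1 (@nat_of_ord _)); rewrite !valF => ->.
Qed.

Lemma inF7 (x : 'F_7) : nat_of_ord x \in F7.
Proof. by rewrite mem_iota add0n; exact: (ltn_ord x). Qed.


Lemma dotv1 (u v w x y z : 'F_7) : u * x + v * y + w * z = 1 ->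
  ((nat_of_ord u * nat_of_ord x + nat_of_ord v * nat_of_ord y + nat_of_ord w * nat_of_ord z) %% 7 == 1)%N.
Proof. by move=> H; apply: (dotv u v w x y z 1); rewrite H. Qed.
Lemma dotv0 (u v w x y z : 'F_7) : u * x + v * y + w * z = 0 ->
  ((nat_of_ord u * nat_of_ord x + nat_of_ord v * nat_of_ord y + nat_of_ord w * nat_of_ord z) %% 7 == 0)%N.
Proof. by move=> H; apply: (dotv u v w x y z 0); rewrite H. Qed.

Lemma chkP S (a b c d e f gg h k : nat) : chk S ->
  a \in F7 -> b \in F7 -> c \in F7 -> d \in F7 -> e \in F7 -> f \in F7 ->
  gg \in F7 -> h \in F7 -> k \in F7 ->
  ((a*a+b*b+c*c) %% 7 == 1)%N -> ((d*d+e*e+f*f) %% 7 == 1)%N -> ((gg*gg+h*h+k*k) %% 7 == 1)%N ->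
  ((a*d+b*e+c*f) %% 7 == 0)%N -> ((a*gg+b*h+c*k) %% 7 == 0)%N -> ((d*gg+e*h+f*k) %% 7 == 0)%N ->
  [:: a;d;gg;b;e;h;c;f;k] \in S.
Proof.
rewrite /chk => H ha hb hc hd he hf hg hh hk c1 c2 c3 c4 c5 c6.
move: (allP H a ha) => {}H; cbv beta in H.
move: (allP H b hb) => {}H; cbv beta in H.
move: (allP H c hc) => {}H; cbv beta in H; rewrite c1 in H.
move: (allP H d hd) => {}H; cbv beta in H.
move: (allP H e he) => {}H; cbv beta in H.
move: (allP H f hf) => {}H; cbv beta in H; rewrite c2 c4 in H.
move: (allP H gg hg) => {}H; cbv beta in H.
move: (allP H h hh) => {}H; cbv beta in H.
move: (allP H k hk) => {}H; cbv beta in H; rewrite c3 c5 c6 in H.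
exact: H.
Qed.

Theorem lemma2p2 :
  forall g : 'M['F_7]_3, O3_7 g ->
  exists (gam : 'M[algC]_3) (c : 'F_7),
    [/\ Gamma_L gam, c != 0 & forall i j, reduces_to (gam i j) (c * g i j)].
Proof.
move=> g Hg.
have E : forall i j : 'I_3, g 0 i * g 0 j + g 1 i * g 1 j + g 2 i * g 2 j = (i == j)%:R.
  move=> i j; move: (Hg) => /matrixP /(_ i j); rewrite mxE sum_I3 !mxE.
  by [].
have lg : lift g.
  have -> : g = mxN [:: nat_of_ord (g 0 0); nat_of_ord (g 0 1); nat_of_ord (g 0 2);
                        nat_of_ord (g 1 0); nat_of_ord (g 1 1); nat_of_ord (g 1 2);
                        nat_of_ord (g 2 0); nat_of_ord (g 2 1); nat_of_ord (g 2 2)].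
    apply/matrixP => i j; rewrite mxE.
    case: i => [[|[|[|i]]] Hi] //; case: j => [[|[|[|j]]] Hj] //=; rewrite natr_Zp;
      by congr (g _ _); apply/val_inj.
  apply: lift_all.
  have E00 : g 0 0 * g 0 0 + g 1 0 * g 1 0 + g 2 0 * g 2 0 = 1 by rewrite E.
  have E11 : g 0 1 * g 0 1 + g 1 1 * g 1 1 + g 2 1 * g 2 1 = 1 by rewrite E.
  have E22 : g 0 2 * g 0 2 + g 1 2 * g 1 2 + g 2 2 * g 2 2 = 1 by rewrite E.
  have E01 : g 0 0 * g 0 1 + g 1 0 * g 1 1 + g 2 0 * g 2 1 = 0 by rewrite E.
  have E02 : g 0 0 * g 0 2 + g 1 0 * g 1 2 + g 2 0 * g 2 2 = 0 by rewrite E.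
  have E12 : g 0 1 * g 0 2 + g 1 1 * g 1 2 + g 2 1 * g 2 2 = 0 by rewrite E.
  have e00 : ((nat_of_ord (g 0%R 0%R) * nat_of_ord (g 0%R 0%R) + nat_of_ord (g 1%R 0%R) * nat_of_ord (g 1%R 0%R)
     + nat_of_ord (g 2%R 0%R) * nat_of_ord (g 2%R 0%R)) %% 7 == 1)%N := dotv1 _ _ _ _ _ _ (E00).
  have e11 : ((nat_of_ord (g 0%R 1%R) * nat_of_ord (g 0%R 1%R) + nat_of_ord (g 1%R 1%R) * nat_of_ord (g 1%R 1%R)
     + nat_of_ord (g 2%R 1%R) * nat_of_ord (g 2%R 1%R)) %% 7 == 1)%N := dotv1 _ _ _ _ _ _ (E11).
  have e22 : ((nat_of_ord (g 0%R 2%R) * nat_of_ord (g 0%R 2%R) + nat_of_ord (g 1%R 2%R) * nat_of_ord (g 1%R 2%R)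
     + nat_of_ord (g 2%R 2%R) * nat_of_ord (g 2%R 2%R)) %% 7 == 1)%N := dotv1 _ _ _ _ _ _ (E22).
  have e01 : ((nat_of_ord (g 0%R 0%R) * nat_of_ord (g 0%R 1%R) + nat_of_ord (g 1%R 0%R) * nat_of_ord (g 1%R 1%R)
     + nat_of_ord (g 2%R 0%R) * nat_of_ord (g 2%R 1%R)) %% 7 == 0)%N := dotv0 _ _ _ _ _ _ (E01).
  have e02 : ((nat_of_ord (g 0%R 0%R) * nat_of_ord (g 0%R 2%R) + nat_of_ord (g 1%R 0%R) * nat_of_ord (g 1%R 2%R)
     + nat_of_ord (g 2%R 0%R) * nat_of_ord (g 2%R 2%R)) %% 7 == 0)%N := dotv0 _ _ _ _ _ _ (E02).
  have e12 : ((nat_of_ord (g 0%R 1%R) * nat_of_ord (g 0%R 2%R) + nat_of_ord (g 1%R 1%R) * nat_of_ord (g 1%R 2%R)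
     + nat_of_ord (g 2%R 1%R) * nat_of_ord (g 2%R 2%R)) %% 7 == 0)%N := dotv0 _ _ _ _ _ _ (E12).
  exact: (@chkP _ _ _ _ _ _ _ _ _ _ chk_ok (inF7 _) (inF7 _) (inF7 _) (inF7 _) (inF7 _) (inF7 _) (inF7 _) (inF7 _) (inF7 _) e00 e11 e22 e01 e02 e12).
case: lg => gam [u r]; exists gam, 1; split.
- split; last exact: u.
  by move=> i j; case: (r i j) => a [b [da db ex _]]; exists a, b.
- exact: oner_neq0.
- by move=> i j; rewrite mul1r.
Qed.
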